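(* Let $D$ be a division semialgebra over $\mathbb{Z}_\mathrm{max}$ with finite unit index, and let $G=D^\times/\mathbb{Z}_\mathrm{max}^\times$. Then for each positive integer $n$, $G$ has at most one cyclic subgroup of order $n$.
   Context: A (possibly noncommutative) semiring has a commutative associative addition with identity $0$ and an associative multiplication with identity $1$, satisfying both distributive laws; a division semiring is one in which every nonzero element is invertible. $\mathbb{Z}_\mathrm{max}=\mathbb{Z}\cup\{-\infty\}$ is the semifield with addition $\max$ and multiplication ordinary addition. A division semialgebra over a semifield $K$ is a division semiring $D$ with an injective homomorphism from $K$ into the center of $D$ (so $K^\times$ is a central subgroup of $D^\times$). The unit index is $\mathrm{ui}(D/K)=|D^\times/K^\times|$. *)

(* Defs.v *)
From HB Require Import structures.
From mathcomp Require Import all_boot all_order all_algebra.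
From mathcomp Require Import zify.
Set Implicit Arguments. Unset Strict Implicit. Unset Printing Implicit Defensive.
Import Order.TTheory GRing.Theory Num.Theory.
Local Open Scope ring_scope.

(** * The tropical semifield Z_max = Z ∪ {-oo}, addition = max, multiplication = +.
    [None] is -oo (the zero), [Some z] is the integer z. *)
Definition Zmax : Type := option int.
HB.instance Definition _ := Choice.on Zmax.

Definition zmax_add (a b : Zmax) : Zmax :=
  match a, b with
  | None, _ => b
  | _, None => a
  | Some x, Some y => Some (if x <= y then y else x)
  end.

Definition zmax_mul (a b : Zmax) : Zmax :=
  match a, b with
  | Some x, Some y => Some (x + y)
  | _, _ => None
  end.

Lemma zmax_addA : associative zmax_add.
Proof.
case=> [x|] [y|] [z|] //=; congr Some;
  repeat case: ifP; move=> *; lia.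
Qed.

Lemma zmax_addC : commutative zmax_add.
Proof. case=> [x|] [y|] //=; congr Some; repeat case: ifP; move=> *; lia. Qed.

Lemma zmax_add0 : left_id (None : Zmax) zmax_add.
Proof. by case. Qed.

HB.instance Definition _ := GRing.isNmodule.Build Zmax zmax_addA zmax_addC zmax_add0.

Lemma zmax_mulA : associative zmax_mul.
Proof. case=> [x|] [y|] [z|] //=; congr Some; lia. Qed.

Lemma zmax_mulC : commutative zmax_mul.
Proof. case=> [x|] [y|] //=; congr Some; lia. Qed.

Lemma zmax_mul1 : left_id (Some 0 : Zmax) zmax_mul.
Proof. case=> [x|] //=; congr Some; lia. Qed.

Lemma zmax_mulDl : left_distributive zmax_mul (@GRing.add Zmax).
Proof.
case=> [x|] [y|] [z|] //=; congr Some; repeat case: ifP; move=> *; lia.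
Qed.

Lemma zmax_mul0 : left_zero (GRing.zero : Zmax) zmax_mul.
Proof. by case. Qed.

Lemma zmax_one_neq0 : (Some 0 : Zmax) != GRing.zero.
Proof. by []. Qed.

HB.instance Definition _ := GRing.Nmodule_isComNzSemiRing.Build Zmax
  zmax_mulA zmax_mulC zmax_mul1 zmax_mulDl zmax_mul0 zmax_one_neq0.

(** The units of Z_max are exactly the [Some z]. *)
Definition Zmax_of_int (z : int) : Zmax := Some z.

Section Semiring.
Variable D : nzSemiRingType.

Definition sunit (x : D) : Prop := exists y : D, x * y = 1 /\ y * x = 1.

Definition division_semiring : Prop := forall x : D, x != 0 -> sunit x.

Definition division_semialgebra_Zmax (f : {rmorphism Zmax -> D}) : Prop :=
  [/\ division_semiring, injective f & forall (a : Zmax) (x : D), f a * x = x * f a].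

Variable f : {rmorphism Zmax -> D}.

(** Membership in the central subgroup K^x = f(Z_max^x) of D^x. *)
Definition inKunit (x : D) : Prop := exists z : int, x = f (Zmax_of_int z).

(** Equality in G = D^x / K^x of the classes of two units. *)
Definition Gcong (x y : D) : Prop := exists z : int, x = f (Zmax_of_int z) * y.

(** Finite unit index: D^x/K^x is finite, i.e. finitely many classes. *)
Definition finite_unit_index : Prop :=
  exists s : seq D, (forall v, v \in s -> sunit v) /\
    forall u : D, sunit u -> exists2 v, v \in s & Gcong u v.

(** The class of the unit x has order n in G. *)
Definition Gorder (x : D) (n : nat) : Prop :=
  (0 < n)%N /\ inKunit (x ^+ n) /\
  forall m : nat, (0 < m < n)%N -> ~ inKunit (x ^+ m).

(** The cyclic subgroup of G generated by the class of x, as a predicate on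
    units (a unit u lies in it iff its class is a power of the class of x;
    for x of finite order nonnegative powers suffice). *)
Definition Gcyclic (x : D) : D -> Prop :=
  fun u => sunit u /\ exists k : nat, Gcong u (x ^+ k).

End Semiring.

(* Main.v *)
Require Import Defs.
From HB Require Import structures.
From mathcomp Require Import all_boot all_order all_algebra.
From mathcomp Require Import zify ring.
From Stdlib Require Import ClassicalEpsilon.
Import GRing.Theory.
Local Open Scope ring_scope.
Set Implicit Arguments. Unset Strict Implicit.

Section Proof16.
Variable D : nzSemiRingType.
Variable f : {rmorphism Zmax -> D}.

Local Notation le x y := (x + y = y).
Local Notation kk z := (f (Zmax_of_int z)).

Lemma one_one : (1 : D) + 1 = 1.
Proof. by rewrite -(rmorph1 f) -rmorphD. Qed.

Lemma idem (x : D) : x + x = x.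
Proof. by rewrite -{1 2}(mulr1 x) -mulrDr one_one mulr1. Qed.

Lemma le_trans' (x y z : D) : le x y -> le y z -> le x z.
Proof. by move=> h1 h2; rewrite -h2 addrA h1. Qed.

Lemma le_antisym' (x y : D) : le x y -> le y x -> x = y.
Proof. by move=> h1 h2; rewrite -h1 -{1}h2 addrC. Qed.

Lemma le_mull (z x y : D) : le x y -> le (z * x) (z * y).
Proof. by move=> h; rewrite -mulrDr h. Qed.

Lemma le_mulr (z x y : D) : le x y -> le (x * z) (y * z).
Proof. by move=> h; rewrite -mulrDl h. Qed.

Lemma le_addl (x y : D) : le x (x + y).
Proof. by rewrite addrA idem. Qed.

Lemma le_addr (x y : D) : le y (x + y).
Proof. by rewrite addrC -addrA idem. Qed.

Lemma le_add2 (x y z : D) : le x z -> le y z -> le (x + y) z.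
Proof. by move=> h1 h2; rewrite -addrA h2 h1. Qed.

Lemma le_expn (x y : D) m : le x y -> le (x ^+ m) (y ^+ m).
Proof.
move=> h; elim: m => [|m IH]; first by rewrite !expr0 idem.
rewrite !exprS; exact: (le_trans' (le_mull x IH) (le_mulr _ h)).
Qed.

Lemma sunitX (p : D) m : sunit p -> sunit (p ^+ m).
Proof.
move=> [v [pv vp]]; exists (v ^+ m).
have c : GRing.comm p v by rewrite /GRing.comm pv vp.
have c' : GRing.comm v p by rewrite /GRing.comm pv vp.
by rewrite -!exprMn_comm // pv vp expr1n.
Qed.

Lemma sunitM (p q : D) : sunit p -> sunit q -> sunit (p * q).
Proof.
move=> [v [pv vp]] [w [qw wq]]; exists (w * v); split.
  by rewrite mulrA -(mulrA p) qw mulr1 pv.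
by rewrite mulrA -(mulrA w) vp mulr1 wq.
Qed.

Lemma cancel_l (a x y : D) : sunit a -> a * x = a * y -> x = y.
Proof. by move=> [v [av va]] h; rewrite -(mul1r x) -va -mulrA h mulrA va mul1r. Qed.

Lemma cancel_r (a x y : D) : sunit a -> x * a = y * a -> x = y.
Proof. by move=> [v [av va]] h; rewrite -(mulr1 x) -av mulrA h -mulrA av mulr1. Qed.

Lemma kM z w : kk z * kk w = kk (z + w).
Proof. by rewrite -rmorphM. Qed.

Lemma k0 : kk 0 = 1.
Proof. exact: rmorph1. Qed.

Lemma kD z w : kk z + kk w = kk (if z <= w then w else z).
Proof. by rewrite -rmorphD. Qed.

Lemma kX z m : kk z ^+ m = kk (z * m%:Z).
Proof.
elim: m => [|m IH]; first by rewrite expr0 mulr0 k0.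
by rewrite exprS IH kM -addn1 PoszD mulrDr mulr1 addrC.
Qed.

Lemma sunitk z : sunit (kk z).
Proof. by exists (kk (- z)); rewrite !kM subrr addrC subrr k0. Qed.

Lemma le1_sunit (Hdiv : division_semiring D) (a : D) : le 1 a -> sunit a.
Proof.
move=> h; apply: Hdiv; apply/eqP => a0; move: h; rewrite a0 addr0 => /eqP.
by rewrite oner_eq0.
Qed.

Lemma chain (p q : D) m : sunit p -> le p q -> (0 < m)%N -> p ^+ m = q ^+ m -> p = q.
Proof.
move=> up h; case: m => // m _ e.
apply: (cancel_l (sunitX m up)); apply: le_antisym'; first exact: le_mull.
rewrite -exprSr e exprSr; apply: le_mulr; exact: le_expn.
Qed.

Fixpoint S (u : D) (n : nat) : D := match n with 0 => 1 | m.+1 => 1 + u * S u m end.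

Lemma le1S u m : le 1 (S u m).
Proof. by case: m => [|m] /=; [rewrite idem | rewrite addrA idem]. Qed.

Lemma le_add_mono (a b : D) : le a b -> le (1 + a) (1 + b).
Proof. by move=> h; rewrite addrACA idem h. Qed.

Lemma S_mono u m : le (S u m) (S u m.+1).
Proof.
elim: m => [|m IH] /=; first exact: le_addl.
by apply: le_add_mono; apply: le_mull.
Qed.

Lemma S_pow (u : D) m : (1 + u) ^+ m = S u m.
Proof.
elim: m => [|m IH]; first by rewrite expr0.
rewrite exprS IH mulrDl mul1r /=; apply: le_antisym'.
  by apply: le_add2; [exact: (S_mono u m) | exact: le_addr].
apply: le_add2; first by apply: le_trans' (le1S u m) _; exact: le_addl.
exact: le_addr.
Qed.

Lemma S_add (u : D) m k : S u (m + k) = S u m + u ^+ m * S u k.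
Proof.
elim: m => [|m IH]; first by rewrite add0n expr0 mul1r le1S.
by rewrite addSn /= IH mulrDr mulrA -exprS addrA.
Qed.

Lemma pow_sum (Hdiv : division_semiring D) (u : D) N : (1 + u) ^+ N = 1 + u ^+ N.
Proof.
have uA : sunit ((1 + u) ^+ N).
  by apply: le1_sunit => //; rewrite -{1}(expr1n _ N); apply: le_expn; exact: le_addl.
apply: (cancel_r uA); rewrite -exprD S_pow S_add -S_pow.
by rewrite -{1}(mul1r ((1 + u) ^+ N)) -mulrDl.
Qed.

Lemma tot (Hdiv : division_semiring D) (u : D) N d :
  sunit u -> (0 < N)%N -> u ^+ N = kk d -> 1 + u = 1 \/ 1 + u = u.
Proof.
move=> uu N0 e; have := pow_sum Hdiv u N; rewrite e -[in 1 + kk d]k0 kD.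
case: ifP => _ h.
  right; apply: esym; apply: (chain uu (le_addr _ _) N0); by rewrite h e.
left; apply: esym; apply: (chain (m := N)) => //.
- by exists 1; rewrite mulr1.
- exact: le_addl.
- by rewrite h k0 expr1n.
Qed.

Lemma pig_aux (w v : D) (i j : nat) z1 z2 : sunit w -> (i < j)%N ->
  w ^+ i = kk z1 * v -> w ^+ j = kk z2 * v ->
  exists N, (0 < N)%N /\ exists d, w ^+ N = kk d.
Proof.
move=> uw ij ei ej; exists (j - i)%N; split; first by rewrite subn_gt0.
exists (z2 - z1); apply: (cancel_r (sunitX i uw)).
rewrite -exprD subnK; last exact: ltnW.
by rewrite ej ei mulrA kM addrNK.
Qed.

Lemma pig (Hfin : finite_unit_index f) (w : D) : sunit w ->
  exists N, (0 < N)%N /\ exists d, w ^+ N = kk d.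
Proof.
move=> uw; have [s [_ Hall]] := Hfin.
have H : forall i : 'I_(size s).+1, exists j : 'I_(size s), Gcong f (w ^+ i) (nth 0 s j).
  move=> i; have [v vs Hv] := Hall _ (sunitX i uw).
  by exists (Ordinal (introT idP (etrans (index_mem v s) vs))); rewrite /= nth_index.
pose F i := proj1_sig (constructive_indefinite_description _ (H i)).
have HF (i : 'I_(size s).+1) : Gcong f (w ^+ i) (nth 0 s (F i)) := proj2_sig (constructive_indefinite_description _ (H i)).
have : ~~ injectiveb F.
  apply/negP => /injectiveP Hi; have := @leq_card _ _ F Hi; by rewrite !card_ord ltnn.
move/injectivePn => [i [j ij Fij]].
have [z1 e1] := HF i; have [z2 e2] := HF j; rewrite Fij in e1.
case: (ltngtP i j) => h.
- exact: pig_aux uw h e1 e2.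
- exact: pig_aux uw h e2 e1.
- by move: ij; rewrite (val_inj h) eqxx.
Qed.

Lemma UR (Hdiv : division_semiring D) (Hfin : finite_unit_index f) (p q : D) m :
  sunit p -> sunit q -> (0 < m)%N -> p ^+ m = q ^+ m -> p = q.
Proof.
move=> up uq m0 e; have [v [pv vp]] := up.
have uw : sunit (v * q) by apply: sunitM => //; exists p.
have pw : p * (v * q) = q by rewrite mulrA pv mul1r.
have [N [N0 [d ed]]] := pig Hfin uw.
case: (tot Hdiv uw N0 ed) => h.
  apply: esym; apply: (chain uq _ m0 (esym e)).
  by rewrite -{1}pw -{2}(mulr1 p) -mulrDr addrC h mulr1.
apply: (chain up _ m0 e).
by rewrite -{1}pw -{1}(mulr1 p) -mulrDr h pw.
Qed.

Lemma gen (Hdiv : division_semiring D) (Hcen : forall (a : Zmax) (x : D), f a * x = x * f a)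
  (Hfin : finite_unit_index f) (x y : D) n :
  sunit x -> sunit y -> Gorder f x n -> Gorder f y n ->
  exists z, exists j : nat, x = kk z * y ^+ j.
Proof.
move=> ux uy [n0 [[a ea] _]] [_ [[b eb] ymin]].
have g1 : gcdn `|b|%N n = 1%N.
  set g := gcdn `|b|%N n.
  have g0 : (0 < g)%N by rewrite gcdn_gt0 n0 orbT.
  have nE : n = (n %/ g * g)%N by rewrite divnK // dvdn_gcdr.
  have bE : b = (b %/ g%:Z)%Z * g%:Z by rewrite divzK //; exact: dvdn_gcdl.
  have h : y ^+ (n %/ g) = kk (b %/ g%:Z)%Z.
    apply: (UR Hdiv Hfin (m:=g)) => //; first exact: sunitX.
      exact: sunitk.
    by rewrite -exprM -nE eb kX -bE.
  apply/eqP; apply: contraT => gn1.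
  move: nE h; set q := (n %/ g)%N => nE h.
  have qb : (0 < q < n)%N.
    have : g != 1%N by [].
    move: gn1 => _ gn1; nia.
  by case: (ymin q qb); exists (b %/ g%:Z)%Z.
have [u [v Bz]] := Bezoutz b n%:Z.
rewrite /gcdz /= g1 in Bz.
set kq := ((a * u) %/ n%:Z)%Z; set r := ((a * u) %% n%:Z)%Z.
have r0 : 0 <= r by apply: modz_ge0; rewrite eqz_nat -lt0n.
have E := divz_eq (a * u) n%:Z; rewrite -/kq -/r in E.
have hr : r = a * u - kq * n%:Z by rewrite E; ring.
exists (kq * b + a * v), `|r|%N.
apply: (UR Hdiv Hfin (m:=n)) => //.
  by apply: sunitM; [exact: sunitk | exact: sunitX].
rewrite ea exprMn_comm; last by rewrite /GRing.comm Hcen.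
rewrite kX exprAC eb kX kM; congr (f (Zmax_of_int _)).
rewrite gez0_abs // hr.
have Ea : a = a * (u * b + v * n%:Z) by rewrite Bz mulr1.
rewrite {1}Ea; ring.
Qed.

Lemma cyc (Hdiv : division_semiring D) (Hcen : forall (a : Zmax) (x : D), f a * x = x * f a)
  (Hfin : finite_unit_index f) (x y : D) n :
  sunit x -> sunit y -> Gorder f x n -> Gorder f y n ->
  forall u, Gcyclic f x u -> Gcyclic f y u.
Proof.
move=> ux uy ox oy u [uu [k [z ez]]]; split => //.
have [z' [j ej]] := gen Hdiv Hcen Hfin ux uy ox oy.
exists (j * k)%N; exists (z + z' * k%:Z).
rewrite ez ej exprMn_comm; last by rewrite /GRing.comm Hcen.
by rewrite kX exprM mulrA kM.
Qed.

End Proof16.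

Theorem mainTheorem16 (D : nzSemiRingType) (f : {rmorphism Zmax -> D}) :
  division_semialgebra_Zmax f ->
  finite_unit_index f ->
  forall n : nat, (0 < n)%N ->
  forall x y : D, sunit x -> sunit y ->
    Gorder f x n -> Gorder f y n ->
    forall u : D, Gcyclic f x u <-> Gcyclic f y u.
Proof.
move=> [Hdiv _ Hcen] Hfin n _ x y ux uy ox oy u; split.
  exact: (cyc Hdiv Hcen Hfin ux uy ox oy).
exact: (cyc Hdiv Hcen Hfin uy ux oy ox).
Qed.
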